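(* In a $2^K$ factorial experiment, for each $*\in\{N,F,L\}$, $\tilde\tau_*=C_S\hat Y_*$ and $\tilde\Omega_*=C_S\hat\Psi_*C_S^T$.
   Context: A $2^K$ factorial experiment ($K$ a positive integer) has $K$ binary factors and $Q=2^K$ treatment levels $q=(z_1,\dots,z_K)\in\{-1,+1\}^K$, identified with $1,\dots,Q$ in lexicographical order ($-1$ before $+1$). There are $N$ units with observed outcomes $Y_i$ and covariates $x_i\in\mathbb R^J$ (with $\sum_ix_i=0$); $Z_{ik}\in\{-1,+1\}$ is the level of factor $k$ received by unit $i$, $t_i\in\{0,1\}^Q$ is the indicator vector of unit $i$'s treatment level, and each level is received by at least one unit. Let $\mathcal P_K$ be the set of nonempty subsets of $\{1,\dots,K\}$, $Z_{i,\mathcal K}=\prod_{k\in\mathcal K}Z_{ik}$, and $c_{\mathcal K}\in\mathbb R^Q$ the vector whose entry at level $(z_1,\dots,z_K)$ is $2^{-(K-1)}\prod_{k\in\mathcal K}z_k$. $C_S$ is the $(Q-1)\times Q$ matrix with rows $c_{\mathcal K}^T$, $\mathcal K\in\mathcal P_K$, in a fixed order. Treatment-based OLS regressions (no intercept): unadjusted $Y_i\sim t_i$, additive $Y_i\sim t_i+x_i$, fully interacted $Y_i\sim t_i+t_i\otimes x_i$; $\hat Y_*$ ($*=N,F,L$) is the coefficient vector of $t_i$ and $\hat\Psi_*$ its Eicker–Huber–White (EHW) covariance estimator (the corresponding block of $(X^TX)^{-1}X^T\mathrm{diag}(\hat\epsilon_i^2)X(X^TX)^{-1}$, $X$ the design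 matrix, $\hat\epsilon_i$ OLS residuals). Factor-saturated OLS regressions: $Y_i\sim1+\sum_{\mathcal K\in\mathcal P_K}Z_{i,\mathcal K}$ (N), $Y_i\sim1+\sum_{\mathcal K\in\mathcal P_K}Z_{i,\mathcal K}+x_i$ (F), $Y_i\sim1+\sum_{\mathcal K\in\mathcal P_K}Z_{i,\mathcal K}+x_i+\sum_{\mathcal K\in\mathcal P_K}Z_{i,\mathcal K}x_i$ (L). $\tilde\tau_{*,\mathcal K}$ is 2 times the OLS coefficient of $Z_{i,\mathcal K}$ in regression $*$, $\tilde\tau_*=(\tilde\tau_{*,\mathcal K})_{\mathcal K\in\mathcal P_K}$ in the same order as the rows of $C_S$, and $\tilde\Omega_*$ is the EHW covariance estimator of $\tilde\tau_*$ from the same fit (4 times the EHW covariance of these coefficients). *)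

(* Defs.v *)
From HB Require Import structures.
From mathcomp Require Import all_boot all_order all_algebra.
Set Implicit Arguments. Unset Strict Implicit. Unset Printing Implicit Defensive.
Import Order.TTheory GRing.Theory Num.Theory.
Local Open Scope ring_scope.

(* Treatment levels are 'I_(2^K), in lexicographic order of (z_1,...,z_K)
   with -1 before +1: level q has z_k = +1 iff the bit of q of weight
   2^(K-1-k) is set (k = 0 is the first factor, the most significant bit). *)
Definition lev_bit (K : nat) (q : 'I_(2 ^ K)) (k : 'I_K) : bool :=
  odd (q %/ 2 ^ (K.-1 - k))%N.

Definition sgnb (R : ringType) (b : bool) : R := if b then 1 else -1.

Definition Zfac (R : ringType) (N K : nat) (T : 'I_N -> 'I_(2 ^ K))
  (i : 'I_N) (k : 'I_K) : R := sgnb R (lev_bit (T i) k).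

Definition treat_mx (R : ringType) (N Q : nat) (T : 'I_N -> 'I_Q) : 'M[R]_(N, Q) :=
  \matrix_(i, q) (T i == q)%:R.

(* rows a_i (x) x_i (Kronecker product of the i-th rows) *)
Definition kron_rows (R : ringType) (N m J : nat) (A : 'M[R]_(N, m))
  (X : 'M[R]_(N, J)) : 'M[R]_(N, m * J) :=
  \matrix_(i < N) mxvec ((row i A)^T *m row i X).

(* columns Z_{i,Kset} for the nonempty subsets, in the order given by [sub] *)
Definition contrast_mx (R : ringType) (N K : nat) (T : 'I_N -> 'I_(2 ^ K))
  (sub : 'I_((2 ^ K).-1) -> {set 'I_K}) : 'M[R]_(N, (2 ^ K).-1) :=
  \matrix_(i, j) \prod_(k in sub j) Zfac R T i k.

Definition CS (R : fieldType) (K : nat) (sub : 'I_((2 ^ K).-1) -> {set 'I_K})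
  : 'M[R]_((2 ^ K).-1, 2 ^ K) :=
  \matrix_(j, q) ((2 ^+ K.-1)^-1 * \prod_(k in sub j) sgnb R (lev_bit q k)).

Definition ones_col (R : ringType) (N : nat) : 'M[R]_(N, 1) := const_mx 1.

Definition ols (R : fieldType) (N p : nat) (X : 'M[R]_(N, p)) (Y : 'cV[R]_N)
  : 'cV[R]_p := invmx (X^T *m X) *m (X^T *m Y).

Definition ols_resid (R : fieldType) (N p : nat) (X : 'M[R]_(N, p)) (Y : 'cV[R]_N)
  : 'cV[R]_N := Y - X *m ols X Y.

Definition ehw (R : fieldType) (N p : nat) (X : 'M[R]_(N, p)) (Y : 'cV[R]_N)
  : 'M[R]_p :=
  let G := invmx (X^T *m X) in
  let e := ols_resid X Y in
  G *m (X^T *m diag_mx (\row_i (e i 0 ^+ 2)) *m X) *m G.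

Definition designN_t (R : ringType) N K (T : 'I_N -> 'I_(2 ^ K)) : 'M[R]_(N, 2 ^ K) :=
  treat_mx R T.
Definition designF_t (R : ringType) N K J (T : 'I_N -> 'I_(2 ^ K)) (X : 'M[R]_(N, J))
  : 'M[R]_(N, 2 ^ K + J) := row_mx (treat_mx R T) X.
Definition designL_t (R : ringType) N K J (T : 'I_N -> 'I_(2 ^ K)) (X : 'M[R]_(N, J))
  : 'M[R]_(N, 2 ^ K + 2 ^ K * J) := row_mx (treat_mx R T) (kron_rows (treat_mx R T) X).

Definition designN_f (R : ringType) N K (T : 'I_N -> 'I_(2 ^ K))
  (sub : 'I_((2 ^ K).-1) -> {set 'I_K}) : 'M[R]_(N, 1 + (2 ^ K).-1) :=
  row_mx (ones_col R N) (contrast_mx R T sub).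
Definition designF_f (R : ringType) N K J (T : 'I_N -> 'I_(2 ^ K))
  (sub : 'I_((2 ^ K).-1) -> {set 'I_K}) (X : 'M[R]_(N, J))
  : 'M[R]_(N, 1 + (2 ^ K).-1 + J) := row_mx (designN_f R T sub) X.
Definition designL_f (R : ringType) N K J (T : 'I_N -> 'I_(2 ^ K))
  (sub : 'I_((2 ^ K).-1) -> {set 'I_K}) (X : 'M[R]_(N, J))
  : 'M[R]_(N, 1 + (2 ^ K).-1 + J + (2 ^ K).-1 * J) :=
  row_mx (designF_f T sub X) (kron_rows (contrast_mx R T sub) X).

Definition YhatN (R : fieldType) N K (T : 'I_N -> 'I_(2 ^ K)) (Y : 'cV[R]_N)
  : 'cV[R]_(2 ^ K) := ols (designN_t R T) Y.
Definition PsiN (R : fieldType) N K (T : 'I_N -> 'I_(2 ^ K)) (Y : 'cV[R]_N)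
  : 'M[R]_(2 ^ K) := ehw (designN_t R T) Y.
Definition YhatF (R : fieldType) N K J (T : 'I_N -> 'I_(2 ^ K)) (X : 'M[R]_(N, J))
  (Y : 'cV[R]_N) : 'cV[R]_(2 ^ K) := usubmx (ols (designF_t T X) Y).
Definition PsiF (R : fieldType) N K J (T : 'I_N -> 'I_(2 ^ K)) (X : 'M[R]_(N, J))
  (Y : 'cV[R]_N) : 'M[R]_(2 ^ K) := ulsubmx (ehw (designF_t T X) Y).
Definition YhatL (R : fieldType) N K J (T : 'I_N -> 'I_(2 ^ K)) (X : 'M[R]_(N, J))
  (Y : 'cV[R]_N) : 'cV[R]_(2 ^ K) := usubmx (ols (designL_t T X) Y).
Definition PsiL (R : fieldType) N K J (T : 'I_N -> 'I_(2 ^ K)) (X : 'M[R]_(N, J))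
  (Y : 'cV[R]_N) : 'M[R]_(2 ^ K) := ulsubmx (ehw (designL_t T X) Y).

Definition tauN (R : fieldType) N K (T : 'I_N -> 'I_(2 ^ K))
  (sub : 'I_((2 ^ K).-1) -> {set 'I_K}) (Y : 'cV[R]_N) : 'cV[R]_((2 ^ K).-1) :=
  2 *: dsubmx (ols (designN_f R T sub) Y).
Definition OmegaN (R : fieldType) N K (T : 'I_N -> 'I_(2 ^ K))
  (sub : 'I_((2 ^ K).-1) -> {set 'I_K}) (Y : 'cV[R]_N) : 'M[R]_((2 ^ K).-1) :=
  4 *: drsubmx (ehw (designN_f R T sub) Y).
Definition tauF (R : fieldType) N K J (T : 'I_N -> 'I_(2 ^ K))
  (sub : 'I_((2 ^ K).-1) -> {set 'I_K}) (X : 'M[R]_(N, J)) (Y : 'cV[R]_N)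
  : 'cV[R]_((2 ^ K).-1) := 2 *: dsubmx (usubmx (ols (designF_f T sub X) Y)).
Definition OmegaF (R : fieldType) N K J (T : 'I_N -> 'I_(2 ^ K))
  (sub : 'I_((2 ^ K).-1) -> {set 'I_K}) (X : 'M[R]_(N, J)) (Y : 'cV[R]_N)
  : 'M[R]_((2 ^ K).-1) := 4 *: drsubmx (ulsubmx (ehw (designF_f T sub X) Y)).
Definition tauL (R : fieldType) N K J (T : 'I_N -> 'I_(2 ^ K))
  (sub : 'I_((2 ^ K).-1) -> {set 'I_K}) (X : 'M[R]_(N, J)) (Y : 'cV[R]_N)
  : 'cV[R]_((2 ^ K).-1) :=
  2 *: dsubmx (usubmx (usubmx (ols (designL_f T sub X) Y))).
Definition OmegaL (R : fieldType) N K J (T : 'I_N -> 'I_(2 ^ K))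
  (sub : 'I_((2 ^ K).-1) -> {set 'I_K}) (X : 'M[R]_(N, J)) (Y : 'cV[R]_N)
  : 'M[R]_((2 ^ K).-1) :=
  4 *: drsubmx (ulsubmx (ulsubmx (ehw (designL_f T sub X) Y))).

(* Main.v *)
Require Import Defs.
From HB Require Import structures.
From mathcomp Require Import all_boot all_order all_algebra.
Set Implicit Arguments. Unset Strict Implicit. Unset Printing Implicit Defensive.
Import Order.TTheory GRing.Theory Num.Theory.
Local Open Scope ring_scope.
Section Gen.
Variable R : fieldType.

Lemma invmx_right n (A C : 'M[R]_n) : A *m C = 1%:M -> invmx A = C.
Proof.
move=> h; have [Au _] := mulmx1_unit h.
by rewrite -[invmx A]mulmx1 -h mulmxA mulVmx // mul1mx.
Qed.

Lemma sq_inv p p' (B : 'M[R]_(p, p')) (B' : 'M[R]_(p', p)) :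
  p = p' -> B *m B' = 1%:M -> B' *m B = 1%:M.
Proof. by move=> e; case: p' / e in B B' *; apply: mulmx1C. Qed.

Lemma ols_reparam N p p' (X : 'M[R]_(N, p)) (B : 'M[R]_(p, p')) B' (Y : 'cV[R]_N) :
  X^T *m X \in unitmx -> B *m B' = 1%:M -> B' *m B = 1%:M ->
  ols (X *m B) Y = B' *m ols X Y /\
  ehw (X *m B) Y = B' *m ehw X Y *m B'^T.
Proof.
move=> XU BB' B'B.
have Ginv : invmx ((X *m B)^T *m (X *m B)) = B' *m invmx (X^T *m X) *m B'^T.
  apply: invmx_right.
  rewrite trmx_mul -!mulmxA [B *m (B' *m _)]mulmxA BB' mul1mx.
  rewrite [X^T *m (X *m _)]mulmxA [(X^T *m X) *m (_ *m _)]mulmxA mulmxV //.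
  by rewrite mul1mx -trmx_mul B'B trmx1.
have BBt : B'^T *m B^T = 1%:M by rewrite -trmx_mul BB' trmx1.
have Hols : ols (X *m B) Y = B' *m ols X Y.
  rewrite /ols Ginv trmx_mul -!mulmxA [B'^T *m (B^T *m _)]mulmxA BBt mul1mx.
  by rewrite !mulmxA.
have Hres : ols_resid (X *m B) Y = ols_resid X Y.
  by rewrite /ols_resid Hols -!mulmxA [B *m (B' *m _)]mulmxA BB' mul1mx.
split=> //.
rewrite /ehw /= Hres Ginv; set G := invmx _; set W := diag_mx _.
rewrite trmx_mul -!mulmxA [B'^T *m (B^T *m _)]mulmxA BBt mul1mx.
rewrite [B *m (B' *m _)]mulmxA BB' mul1mx.
by rewrite !mulmxA.
Qed.

Lemma usub_mul m1 m2 n p (M : 'M[R]_(m1 + m2, n)) (v : 'M[R]_(n, p)) :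
  usubmx (M *m v) = usubmx M *m v.
Proof. by rewrite -{1}[M]vsubmxK mul_col_mx col_mxKu. Qed.
Lemma dsub_mul m1 m2 n p (M : 'M[R]_(m1 + m2, n)) (v : 'M[R]_(n, p)) :
  dsubmx (M *m v) = dsubmx M *m v.
Proof. by rewrite -{1}[M]vsubmxK mul_col_mx col_mxKd. Qed.
Lemma ulsub_sand m1 m2 n (M : 'M[R]_(m1 + m2, n)) (P : 'M[R]_n) :
  ulsubmx (M *m P *m M^T) = usubmx M *m P *m (usubmx M)^T.
Proof.
rewrite -{1 2}[M]vsubmxK tr_col_mx mul_col_mx mul_col_row block_mxKul //.
Qed.
Lemma drsub_sand m1 m2 n (M : 'M[R]_(m1 + m2, n)) (P : 'M[R]_n) :
  drsubmx (M *m P *m M^T) = dsubmx M *m P *m (dsubmx M)^T.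
Proof.
rewrite -{1 2}[M]vsubmxK tr_col_mx mul_col_mx mul_col_row block_mxKdr //.
Qed.
Lemma row0_mul m n1 n2 p (A : 'M[R]_(m, n1)) (v : 'M[R]_(n1 + n2, p)) :
  row_mx A (0 : 'M_(m, n2)) *m v = A *m usubmx v.
Proof. by rewrite -{1}[v]vsubmxK mul_row_col mul0mx addr0. Qed.
Lemma row0_sand m n1 n2 (A : 'M[R]_(m, n1)) (P : 'M[R]_(n1 + n2)) :
  row_mx A (0 : 'M_(m, n2)) *m P *m (row_mx A 0)^T = A *m ulsubmx P *m A^T.
Proof.
rewrite row0_mul -{1}[P]submxK tr_row_mx trmx0.
by rewrite /block_mx col_mxKu -mulmxA mul_row_col mulmx0 addr0 mulmxA.
Qed.
End Gen.

Section Bits.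
Local Open Scope nat_scope.
Lemma bits_inj (n : nat) : forall q q' : nat, (q < 2 ^ n)%N -> (q' < 2 ^ n)%N ->
  (forall m : nat, (m < n)%N -> odd (q %/ 2 ^ m) = odd (q' %/ 2 ^ m)) -> q = q'.
Proof.
elim: n => [|n IH] q q'.
  by rewrite expn0 !ltnS !leqn0 => /eqP -> /eqP ->.
move=> hq hq' hb.
have h0 := hb 0 (ltn0Sn n); rewrite expn0 !divn1 in h0.
have e : q %/ 2 = q' %/ 2.
  apply: IH.
  - by rewrite ltn_divLR // -expnSr.
  - by rewrite ltn_divLR // -expnSr.
  move=> m hm; rewrite -!divnMA -expnS; exact: hb.
by rewrite (divn_eq q 2) (divn_eq q' 2) e !modn2 h0.
Qed.
End Bits.

Lemma lev_bit_inj K (q q' : 'I_(2 ^ K)) :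
  (forall k : 'I_K, lev_bit q k = lev_bit q' k) -> q = q'.
Proof.
move=> h; apply: val_inj; apply: (@bits_inj K _ _ (ltn_ord q) (ltn_ord q')) => m hm.
have hk : (K.-1 - m < K)%N by rewrite (leq_ltn_trans (leq_subr _ _)) // prednK // (leq_ltn_trans _ hm).
have := h (Ordinal hk); rewrite /lev_bit /= subKn //.
by rewrite -ltnS prednK // (leq_ltn_trans _ hm).
Qed.

Lemma sgnb_mul (R : ringType) b b' : sgnb R b * sgnb R b' = sgnb R (b == b').
Proof. by case: b; case: b' => /=; rewrite ?mulr1 ?mulrN1 ?opprK ?mulN1r. Qed.

Section Main.
Variables (R : realFieldType) (K : nat) (sub : 'I_((2 ^ K).-1) -> {set 'I_K}).
Hypotheses (Kpos : (0 < K)%N) (subinj : injective sub) (sub0 : forall j, sub j != set0).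

Definition chi (q : 'I_(2 ^ K)) (j : 'I_((2 ^ K).-1)) : R :=
  \prod_(k in sub j) sgnb R (lev_bit q k).
Definition CC : 'M[R]_(2 ^ K, (2 ^ K).-1) := \matrix_(q, j) chi q j.
Definition cK : R := (2 ^+ K)^-1.
Definition Bm : 'M[R]_(2 ^ K, 1 + (2 ^ K).-1) := row_mx (const_mx 1) CC.
Definition Dp : 'M[R]_((2 ^ K).-1, 2 ^ K) := cK *: CC^T.
Definition Bp : 'M[R]_(1 + (2 ^ K).-1, 2 ^ K) := col_mx (const_mx cK) Dp.

Lemma sum_sub (f : {set 'I_K} -> R) :
  \sum_j f (sub j) + f set0 = \sum_(S : {set 'I_K}) f S.
Proof.
rewrite [RHS](bigD1 set0) //= addrC; congr (_ + _).
have E : sub @: setT = [set S : {set 'I_K} | S != set0].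
  apply/eqP; rewrite eqEcard; apply/andP; split.
    by apply/subsetP=> S /imsetP [j _ ->]; rewrite inE sub0.
  rewrite card_imset // cardsT card_ord cardsE cardC1.
  by rewrite -cardsT -powersetT card_powerset cardsT card_ord.
rewrite (eq_bigl (fun j => j \in [set: 'I_((2 ^ K).-1)])); last by move=> j; rewrite inE.
rewrite -(big_imset _ (in2W subinj)) /= E.
by apply: eq_bigl => S; rewrite inE.
Qed.

Lemma two_neq0 : (2 : R) != 0. Proof. by rewrite pnatr_eq0. Qed.

Lemma BBp : Bm *m Bp = 1%:M.
Proof.
rewrite /Bm /Bp mul_row_col; apply/matrixP => q q'.
rewrite !mxE big_ord1 !mxE mul1r.
under eq_bigr => j _ do rewrite /Dp !mxE mulrCA.
rewrite -mulr_sumr -{1}[cK]mulr1 -mulrDr addrC.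
have -> : \sum_j chi q j * chi q' j + 1 =
   \sum_(S : {set 'I_K}) \prod_(k in S) (sgnb R (lev_bit q k) * sgnb R (lev_bit q' k)).
  rewrite -sum_sub big_set0; congr (_ + _); apply: eq_bigr => j _.
  by rewrite /chi -big_split.
set a := fun k : 'I_K => sgnb R (lev_bit q k) * sgnb R (lev_bit q' k).
have <- : \prod_k (a k + 1) = \sum_(S : {set 'I_K}) \prod_(k in S) a k.
  by rewrite bigA_distr; apply: eq_bigr => S _; rewrite [RHS]big_mkcond.
rewrite /a.
case: (eqVneq q q') => [<-|ne].
  under eq_bigr => k _ do rewrite sgnb_mul eqxx /=.
  rewrite prodr_const card_ord /cK mulVf ?mulr1n //.
  by rewrite expf_neq0 // two_neq0.
have [k hk] : exists k, lev_bit q k != lev_bit q' k.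
  apply/existsP; apply: contraR ne; rewrite negb_exists => /forallP h.
  by apply/eqP/lev_bit_inj => k; apply/eqP; move: (h k); rewrite negbK.
rewrite (bigD1 k) //= sgnb_mul (negbTE hk) /= addNr mul0r mulr0.
by [].
Qed.


Lemma BpB : Bp *m Bm = 1%:M.
Proof.
by apply: sq_inv BBp; rewrite add1n prednK // expn_gt0.
Qed.

Lemma CS_eq : CS R sub = 2 *: Dp.
Proof.
apply/matrixP => j q; rewrite !mxE /cK /chi mulrA; congr (_ * _).
rewrite -[in RHS](prednK Kpos) exprS invfM mulrA mulfV ?mul1r //; exact: two_neq0.
Qed.

Variables (N J : nat) (T : 'I_N -> 'I_(2 ^ K)).
Hypothesis hT : forall q, exists i, T i = q.

Lemma treat_mul p (M : 'M[R]_(2 ^ K, p)) :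
  treat_mx R T *m M = \matrix_(i, j) M (T i) j.
Proof.
apply/matrixP=> i j; rewrite !mxE (bigD1 (T i)) //= mxE eqxx mul1r big1 ?addr0 //.
by move=> q hq; rewrite mxE eq_sym (negbTE hq) mul0r.
Qed.

Lemma contrast_eq : contrast_mx R T sub = treat_mx R T *m CC.
Proof. by rewrite treat_mul; apply/matrixP => i j; rewrite !mxE. Qed.

Lemma designN_eq : designN_f R T sub = treat_mx R T *m Bm.
Proof.
rewrite /designN_f /Bm mul_mx_row -contrast_eq; congr row_mx.
by rewrite treat_mul; apply/matrixP => i j; rewrite !mxE.
Qed.

Lemma treat_gram : (treat_mx R T)^T *m treat_mx R T \in unitmx.
Proof.
have -> : (treat_mx R T)^T *m treat_mx R T =
    diag_mx (\row_q (\sum_i ((T i == q)%:R : R))).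
  apply/matrixP => q q'; rewrite !mxE.
  case: (eqVneq q q') => [<-|ne]; rewrite ?mulr1n ?mulr0n.
    by apply: eq_bigr => i _; rewrite !mxE; case: eqP; rewrite ?mulr1 ?mulr0.
  apply: big1 => i _; rewrite !mxE; case: eqP => [e|]; rewrite ?mul0r //.
  by rewrite e (negbTE ne) mulr0.
rewrite unitmxE det_diag unitfE; apply/prodf_neq0 => q _.
rewrite mxE; have [i0 hi] := hT q; rewrite (bigD1 i0) //= hi eqxx.
apply: lt0r_neq0; apply: (lt_le_trans ltr01); rewrite lerDl.
by apply: sumr_ge0 => i _; apply: ler0n.
Qed.


Variable X : 'M[R]_(N, J).

Definition BF : 'M[R]_(2 ^ K + J, 1 + (2 ^ K).-1 + J) := block_mx Bm 0 0 1%:M.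
Definition BF' : 'M[R]_(1 + (2 ^ K).-1 + J, 2 ^ K + J) := block_mx Bp 0 0 1%:M.

Lemma designF_eq : designF_f T sub X = designF_t T X *m BF.
Proof.
by rewrite /designF_f /designF_t /BF mul_row_block !mulmx0 ?mul0mx addr0 add0r mulmx1 designN_eq.
Qed.

Lemma BFBF' : BF *m BF' = 1%:M.
Proof.
rewrite /BF /BF' mulmx_block ?mulmx0 ?mul0mx ?addr0 ?add0r ?mulmx1 BBp.
by rewrite -scalar_mx_block.
Qed.

Lemma BF'BF : BF' *m BF = 1%:M.
Proof. by apply: sq_inv BFBF'; rewrite add1n prednK // expn_gt0. Qed.

Definition L1 : 'M[R]_(2 ^ K * J, J) :=
  lin1_mx (mulmx (const_mx 1 : 'M[R]_(1, 2 ^ K)) \o vec_mx).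
Definition L2 : 'M[R]_(2 ^ K * J, (2 ^ K).-1 * J) := lin_mx (mulmx CC^T).
Definition L1' : 'M[R]_(J, 2 ^ K * J) :=
  lin1_mx (mxvec \o mulmx (const_mx cK : 'M[R]_(2 ^ K, 1))).
Definition L2' : 'M[R]_((2 ^ K).-1 * J, 2 ^ K * J) := lin_mx (mulmx (cK *: CC)).

Lemma KL1 : kron_rows (treat_mx R T) X *m L1 = X.
Proof.
apply/row_matrixP => i; rewrite row_mul /kron_rows rowK mul_rV_lin1 /= mxvecK mulmxA.
suff -> : (const_mx 1 : 'M[R]_(1, 2 ^ K)) *m (row i (treat_mx R T))^T = 1%:M by rewrite mul1mx.
apply/matrixP => a b; rewrite (ord1 a) (ord1 b) !mxE (bigD1 (T i)) //= !mxE eqxx mul1r.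
rewrite big1 ?addr0 // => q hq; rewrite !mxE eq_sym (negbTE hq) mulr0 //.
Qed.


Lemma KL2 : kron_rows (treat_mx R T) X *m L2 = kron_rows (contrast_mx R T sub) X.
Proof.
apply/row_matrixP => i; rewrite row_mul /kron_rows !rowK mul_vec_lin /=.
by rewrite contrast_eq row_mul trmx_mul mulmxA.
Qed.

Lemma const_mul m p (a b : R) :
  (const_mx a : 'M[R]_(m, 1)) *m (const_mx b : 'M[R]_(1, p)) = const_mx (a * b).
Proof. by apply/matrixP => i j; rewrite !mxE big_ord1 !mxE. Qed.

Lemma LL' : L1 *m L1' + L2 *m L2' = 1%:M.
Proof.
apply/row_matrixP => r; rewrite !rowE; set u := delta_mx 0 r.
rewrite -[u]vec_mxK; set M := vec_mx u.
rewrite mulmxDr !mulmxA mul_rV_lin1 /= [mxvec M *m L1]mul_rV_lin1 /= mxvecK.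
rewrite [mxvec M *m L2]mul_vec_lin mul_vec_lin /= -linearD /= mulmx1; congr mxvec.
have E : (const_mx cK : 'M[R]_(2 ^ K, 1)) *m const_mx 1 + (cK *: CC) *m CC^T = 1%:M.
  have := BBp; rewrite /Bm /Bp mul_row_col /Dp !const_mul mul1r mulr1.
  by rewrite -scalemxAl scalemxAr.
by rewrite !mulmxA -mulmxDl E mul1mx.
Qed.

Definition BL : 'M[R]_(2 ^ K + 2 ^ K * J, 1 + (2 ^ K).-1 + J + (2 ^ K).-1 * J) :=
  block_mx (row_mx Bm 0) 0 (row_mx 0 L1) L2.
Definition BL' : 'M[R]_(1 + (2 ^ K).-1 + J + (2 ^ K).-1 * J, 2 ^ K + 2 ^ K * J) :=
  block_mx (col_mx Bp 0) (col_mx 0 L1') 0 L2'.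

Lemma designL_eq : designL_f T sub X = designL_t T X *m BL.
Proof.
rewrite /designL_f /designL_t /BL mul_row_block !mul_mx_row ?mulmx0 ?add0r ?addr0.
rewrite add_row_mx addr0 add0r KL1 KL2 -mul_mx_row.
by rewrite /designF_f designN_eq.
Qed.

Lemma BLBL' : BL *m BL' = 1%:M.
Proof.
rewrite /BL /BL' mulmx_block !mul_row_col ?mulmx0 ?mul0mx ?addr0 ?add0r.
have := BBp; rewrite /Bm /Bp mul_row_col => ->; rewrite LL'.
by rewrite -scalar_mx_block.
Qed.

Lemma BL'BL : BL' *m BL = 1%:M.
Proof.
apply: sq_inv BLBL'.
have e : (2 ^ K = (2 ^ K).-1.+1)%N by rewrite prednK // expn_gt0.
move: ((2 ^ K).-1) e => n ->; by rewrite add1n mulSn addnA.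
Qed.


Lemma uBF : usubmx BF' = row_mx Bp 0.
Proof. by rewrite /BF' /block_mx col_mxKu. Qed.

Lemma uuBL : usubmx (usubmx BL') = row_mx Bp 0.
Proof. by rewrite /BL' /block_mx col_mxKu -block_mxEh /block_mx col_mxKu. Qed.

Lemma scale_fin (P : 'M[R]_(2 ^ K)) :
  4 *: (Dp *m P *m Dp^T) = (2 *: Dp) *m P *m (2 *: Dp)^T.
Proof.
rewrite [(2 *: Dp)^T]linearZ /= -(scalemxAl 2 Dp P) -(scalemxAl 2 (Dp *m P)).
by rewrite -(scalemxAr 2 (Dp *m P)) scalerA -natrM.
Qed.

Lemma main_sec (Y : 'cV[R]_N) :
  (designF_t T X)^T *m designF_t T X \in unitmx ->
  (designL_t T X)^T *m designL_t T X \in unitmx ->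
  [/\ tauN T sub Y = CS R sub *m YhatN T Y /\
        OmegaN T sub Y = CS R sub *m PsiN T Y *m (CS R sub)^T,
      tauF T sub X Y = CS R sub *m YhatF T X Y /\
        OmegaF T sub X Y = CS R sub *m PsiF T X Y *m (CS R sub)^T
    & tauL T sub X Y = CS R sub *m YhatL T X Y /\
        OmegaL T sub X Y = CS R sub *m PsiL T X Y *m (CS R sub)^T].
Proof.
move=> FU LU; rewrite CS_eq; split.
- have [h1 h2] := ols_reparam Y treat_gram BBp BpB.
  rewrite /tauN /OmegaN designN_eq h1 h2 /YhatN /PsiN /designN_t.
  rewrite dsub_mul drsub_sand /Bp col_mxKd scale_fin; split=> //.
  by rewrite scalemxAl.
- have [h1 h2] := ols_reparam Y FU BFBF' BF'BF.
  rewrite /tauF /OmegaF designF_eq h1 h2 /YhatF /PsiF.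
  rewrite usub_mul uBF row0_mul dsub_mul ulsub_sand uBF row0_sand drsub_sand.
  rewrite /Bp col_mxKd scale_fin; split=> //.
  by rewrite scalemxAl.
- have [h1 h2] := ols_reparam Y LU BLBL' BL'BL.
  rewrite /tauL /OmegaL designL_eq h1 h2 /YhatL /PsiL.
  rewrite [usubmx (BL' *m _)]usub_mul [usubmx (usubmx BL' *m _)]usub_mul.
  rewrite uuBL row0_mul dsub_mul [ulsubmx (BL' *m _ *m _)]ulsub_sand ulsub_sand.
  rewrite uuBL row0_sand drsub_sand.
  rewrite /Bp col_mxKd scale_fin; split=> //.
  by rewrite scalemxAl.
Qed.

End Main.

Theorem proposition1 (R : realFieldType) (K N J : nat)
  (T : 'I_N -> 'I_(2 ^ K)) (X : 'M[R]_(N, J)) (Y : 'cV[R]_N)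
  (sub : 'I_((2 ^ K).-1) -> {set 'I_K}) :
  (0 < K)%N ->
  injective sub -> (forall j, sub j != set0) ->
  (forall q, exists i, T i = q) ->
  (forall j, \sum_i X i j = 0) ->
  (designF_t T X)^T *m designF_t T X \in unitmx ->
  (designL_t T X)^T *m designL_t T X \in unitmx ->
  [/\ tauN T sub Y = CS R sub *m YhatN T Y /\
        OmegaN T sub Y = CS R sub *m PsiN T Y *m (CS R sub)^T,
      tauF T sub X Y = CS R sub *m YhatF T X Y /\
        OmegaF T sub X Y = CS R sub *m PsiF T X Y *m (CS R sub)^T
    & tauL T sub X Y = CS R sub *m YhatL T X Y /\
        OmegaL T sub X Y = CS R sub *m PsiL T X Y *m (CS R sub)^T].
Proof.
move=> Kpos subinj sub0 hT _ FU LU.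
by apply: (main_sec Kpos subinj sub0 hT).
Qed.
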